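(* Let $r:\mathfrak h^*\to\wedge^2\mathfrak g$ be a triangular dynamical $r$-matrix. The following are equivalent: (i) $r$ is splittable, i.e. $i^*\big(r(\lambda)^{\#-1}(\mathfrak h)\big)=\mathfrak h^*$ for every $\lambda\in\mathfrak h^*$, where $r(\lambda)^{\#-1}(\mathfrak h)=\{\xi\in\mathfrak g^*: r(\lambda)^\#\xi\in\mathfrak h\}$; (ii) $r(\lambda)^\#\mathfrak g^*\subset\mathfrak g_\lambda$ for every $\lambda\in\mathfrak h^*$; (iii) for every linear complement $\mathfrak m$ of $\mathfrak h$ in $\mathfrak g$ and every basis $e_1,\dots,e_m$ of $\mathfrak m$, writing $r(\lambda)=\sum a^{ij}(\lambda)h_i\wedge h_j+\sum b^{ij}(\lambda)h_i\wedge e_j+\sum c^{ij}(\lambda)e_i\wedge e_j$ with $a^{ij}=-a^{ji}$, $c^{ij}=-c^{ji}$, one has $\sum_j b^{ij}(\lambda)e_j\in\mathrm{Span}\{\sum_j c^{kj}(\lambda)e_j: k=1,\dots,m\}$ for all $i$ and all $\lambda$; (iv) for each $\lambda\in\mathfrak h^*$ there exist a linear complement $\mathfrak m$ of $\mathfrak h$ in $\mathfrak g$ and a basis $e_1,\dots,e_m$ of $\mathfrak m$ such that $r(\lambda)=\sum a^{ij}(\lambda)h_i\wedge h_j+\sum c^{ij}(\lambda)e_i\wedge e_j$; (v) $T\mathfrak h^*\times\{0\}\subset B$, where $B=\Lambda^\#(A^* )\subset A$.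
   Context: Let $\mathfrak g$ be a finite-dimensional real Lie algebra and $\mathfrak h\subset\mathfrak g$ an abelian Lie subalgebra of dimension $l$ with basis $h_1,\dots,h_l$; $(\lambda^1,\dots,\lambda^l)$ are the induced coordinates on $\mathfrak h^*$. A triangular dynamical $r$-matrix is a smooth map $r:\mathfrak h^*\to\wedge^2\mathfrak g$ with $[h,r(\lambda)]=0$ for $h\in\mathfrak h$ and $\sum_i h_i\wedge\frac{\partial r}{\partial\lambda^i}+\frac12[r,r]=0$ (Schouten-type bracket on $\wedge^\bullet\mathfrak g$). For $\rho\in\wedge^2\mathfrak g$, $\rho^\#:\mathfrak g^*\to\mathfrak g$ is $\langle\rho^\#\xi,\eta\rangle=\rho(\xi,\eta)$; $\mathfrak h^\perp\subset\mathfrak g^*$ is the annihilator of $\mathfrak h$; $i^*:\mathfrak g^*\to\mathfrak h^*$ is restriction; $\mathfrak g_\lambda=\mathfrak h+r(\lambda)^\#\mathfrak h^\perp$. $A=T\mathfrak h^*\times\mathfrak g$ is the bundle over $\mathfrak h^*$ with fiber $A_\lambda\cong\mathfrak h^*\oplus\mathfrak g$, $A^*_\lambda\cong\mathfrak h\oplus\mathfrak g^*$, and $\Lambda^\#:A^*\to A$ is $\Lambda^\#_\lambda(h,\xi)=(i^*\xi,-h+r(\lambda)^\#\xi)$. *)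

(* Defs.v *)
From HB Require Import structures.
From mathcomp Require Import all_boot all_order all_algebra.
From mathcomp Require Import all_classical all_reals all_analysis.
Set Implicit Arguments. Unset Strict Implicit. Unset Printing Implicit Defensive.
Import Order.TTheory GRing.Theory Num.Theory.
Import numFieldNormedType.Exports.
Local Open Scope ring_scope.

(*  g = R^n with standard basis (e_a)_a; elements of g and of g^* are row   *)
(*  vectors 'rV[R]_n, the pairing <x, xi> being  x *m xi^T.                 *)
(*  A bivector rho in wedge^2 g is stored as the skew matrix of its         *)
(*  components rho a b = rho(eps^a, eps^b); hence rho(xi,eta) =             *)
(*  xi *m rho *m eta^T and rho^# xi = xi *m rho.  x /\ y is the matrix       *)
(*  x^T y - y^T x, i.e. (x/\y)(xi,eta) = xi(x)eta(y) - xi(y)eta(x).         *)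
(*  A trivector is stored as its (alternating) component function           *)
(*  t a b c = t(eps^a,eps^b,eps^c); x/\y/\z has determinant components.     *)

Section Defs.
Variable R : realType.
Variable n : nat.

Definition bracket (C : 'I_n -> 'I_n -> 'rV[R]_n) (x y : 'rV[R]_n) : 'rV[R]_n :=
  \sum_(a < n) \sum_(b < n) (x 0 a * y 0 b) *: C a b.

(* C defines a Lie algebra structure (bilinearity is built in). *)
Definition is_lie_algebra (C : 'I_n -> 'I_n -> 'rV[R]_n) : Prop :=
  (forall x y, bracket C x y = - bracket C y x) /\
  (forall x y z, bracket C x (bracket C y z) + bracket C y (bracket C z x)
                 + bracket C z (bracket C x y) = 0).

Definition ev (x : 'rV[R]_n) : 'I_n -> R := fun a => x 0 a.

Definition wedge2 (x y : 'rV[R]_n) : 'M[R]_n := x^T *m y - y^T *m x.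

Definition is_bivector (rho : 'M[R]_n) : Prop := rho^T = - rho.

Definition trivector := 'I_n -> 'I_n -> 'I_n -> R.

Definition wedge3 (x y z : 'rV[R]_n) : trivector := fun a b c =>
  ev x a * (ev y b * ev z c - ev y c * ev z b)
  - ev x b * (ev y a * ev z c - ev y c * ev z a)
  + ev x c * (ev y a * ev z b - ev y b * ev z a).

Definition wedge12 (x : 'rV[R]_n) (beta : 'M[R]_n) : trivector := fun a b c =>
  ev x a * beta b c - ev x b * beta a c + ev x c * beta a b.

Definition tv_add (s t : trivector) : trivector := fun a b c => s a b c + t a b c.
Definition tv_scale (k : R) (t : trivector) : trivector := fun a b c => k * t a b c.
Definition tv_zero : trivector := fun _ _ _ => 0.
Definition tv_sum (I : finType) (F : I -> trivector) : trivector :=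
  fun a b c => \sum_(i : I) F i a b c.

Definition std (a : 'I_n) : 'rV[R]_n := delta_mx 0 a.

Definition schouten_dec (C : 'I_n -> 'I_n -> 'rV[R]_n) (x y u v : 'rV[R]_n)
  : trivector :=
  tv_add (tv_add (wedge3 (bracket C x u) y v)
                 (tv_scale (-1) (wedge3 (bracket C x v) y u)))
         (tv_add (tv_scale (-1) (wedge3 (bracket C y u) x v))
                 (wedge3 (bracket C y v) x u)).

(* Bilinear extension: rho = 1/2 sum_{a,b} rho a b e_a /\ e_b *)
Definition schouten (C : 'I_n -> 'I_n -> 'rV[R]_n) (rho sigma : 'M[R]_n)
  : trivector :=
  tv_sum (fun p : 'I_n * 'I_n * ('I_n * 'I_n) =>
    tv_scale ((rho p.1.1 p.1.2 / 2) * (sigma p.2.1 p.2.2 / 2))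
      (schouten_dec C (std p.1.1) (std p.1.2) (std p.2.1) (std p.2.2))).

(* [h, rho] (adjoint action on wedge^2 g):
   [h, x/\y] = [h,x]/\y + x/\[h,y], extended linearly. *)
Definition ad2 (C : 'I_n -> 'I_n -> 'rV[R]_n) (h : 'rV[R]_n) (rho : 'M[R]_n)
  : 'M[R]_n :=
  \sum_(a < n) \sum_(b < n) (rho a b / 2) *:
     (wedge2 (bracket C h (std a)) (std b) + wedge2 (std a) (bracket C h (std b))).

End Defs.

Section Smooth.
Variables (R : realType) (l : nat).
Fixpoint Ck_fun (k : nat) (f : 'rV[R]_l -> R^o) : Prop :=
  match k with
  | 0 => continuous f
  | k'.+1 => continuous f /\
      forall i : 'I_l, (forall x, derivable f x (delta_mx 0 i)) /\
                       Ck_fun k' ('D_(delta_mx 0 i) f)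
  end.

Definition smooth_fun (f : 'rV[R]_l -> R^o) : Prop :=
  forall k, Ck_fun k f.
End Smooth.

Section Dyn.
Variables (R : realType) (n l : nat).
Variable C : 'I_n -> 'I_n -> 'rV[R]_n.
Variable H : 'M[R]_(l, n).                  (* rows: basis h_1..h_l of h *)

Definition abelian_subalg_basis : Prop :=
  row_free H /\ forall i j : 'I_l, bracket C (row i H) (row j H) = 0.

Definition partial_r (r : 'rV[R]_l -> 'M[R]_n) (i : 'I_l) (lam : 'rV[R]_l)
  : 'M[R]_n :=
  \matrix_(a, b) ('D_(delta_mx 0 i) (fun mu => r mu a b)) lam.

Definition triangular_dynamical_rmatrix (r : 'rV[R]_l -> 'M[R]_n) : Prop :=
  (forall lam, is_bivector (r lam)) /\
  (forall a b : 'I_n, smooth_fun (fun lam => r lam a b)) /\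
  (forall lam (i : 'I_l), ad2 C (row i H) (r lam) = 0) /\
  (forall lam,
     tv_add (tv_sum (fun i : 'I_l => wedge12 (row i H) (partial_r r i lam)))
            (tv_scale (1/2) (schouten C (r lam) (r lam))) = @tv_zero R n).

(* i^* : g^* -> h^*, in the coordinates lambda^i = lambda(h_i) *)
Definition istar (xi : 'rV[R]_n) : 'rV[R]_l := xi *m H^T.

Definition in_h (x : 'rV[R]_n) : Prop := (x <= H)%MS.
Definition in_hperp (xi : 'rV[R]_n) : Prop := istar xi = 0.

Definition sharp (rho : 'M[R]_n) (xi : 'rV[R]_n) : 'rV[R]_n := xi *m rho.

Definition splittable (r : 'rV[R]_l -> 'M[R]_n) : Prop :=
  forall lam (mu : 'rV[R]_l),
    exists xi : 'rV[R]_n, in_h (sharp (r lam) xi) /\ istar xi = mu.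

Definition in_g_lambda (r : 'rV[R]_l -> 'M[R]_n) lam (x : 'rV[R]_n) : Prop :=
  exists y eta, in_h y /\ in_hperp eta /\ x = y + sharp (r lam) eta.

Definition complement_basis k (E : 'M[R]_(k, n)) : Prop :=
  row_free (col_mx H E) /\ row_full (col_mx H E).

Definition skew_mx k (M : 'M[R]_k) : Prop := M^T = - M.

Definition decomp k (E : 'M[R]_(k, n)) (A : 'M[R]_l) (B : 'M[R]_(l, k))
  (Cc : 'M[R]_k) : 'M[R]_n :=
  \sum_(i < l) \sum_(j < l) A i j *: wedge2 (row i H) (row j H)
  + \sum_(i < l) \sum_(j < k) B i j *: wedge2 (row i H) (row j E)
  + \sum_(i < k) \sum_(j < k) Cc i j *: wedge2 (row i E) (row j E).

(* A = T h^* x g, Lambda^#_lambda (h, xi) = (i^* xi, -h + r(lambda)^# xi);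
   the h-component of A^*_lambda = h (+) g^* is given by its coordinates
   c in the basis h_1..h_l, i.e. h = c *m H. *)
Definition Lambda_sharp (r : 'rV[R]_l -> 'M[R]_n) lam
  (p : 'rV[R]_l * 'rV[R]_n) : 'rV[R]_l * 'rV[R]_n :=
  (istar p.2, - (p.1 *m H) + sharp (r lam) p.2).

Definition in_B (r : 'rV[R]_l -> 'M[R]_n) lam (q : 'rV[R]_l * 'rV[R]_n) : Prop :=
  exists p, Lambda_sharp r lam p = q.

End Dyn.

(* Main.v *)
Require Import Defs.
From HB Require Import structures.
From mathcomp Require Import all_boot all_order all_algebra.
From mathcomp Require Import all_classical all_reals all_analysis.
From mathcomp Require Import ring.
Import Order.TTheory GRing.Theory Num.Theory.
Local Open Scope ring_scope.

Section Aux.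
Variables (R : realType) (n : nat).

Lemma rowTrow p q (X : 'M[R]_(p,n)) (Y : 'M[R]_(q,n)) i j :
  (row i X)^T *m row j Y = X^T *m delta_mx i j *m Y.
Proof.
rewrite !rowE trmx_mul trmx_delta !mulmxA; congr (_ *m _); rewrite -mulmxA; congr (_ *m _); exact: mul_delta_mx.
Qed.

Lemma trmx_sum_delta p q (A : 'M[R]_(p,q)) :
  A^T = \sum_i \sum_j A i j *: delta_mx j i.
Proof.
rewrite {1}(matrix_sum_delta A) raddf_sum; apply: eq_bigr => i _.
rewrite raddf_sum; apply: eq_bigr => j _.
by rewrite -trmx_delta; apply/matrixP => a b; rewrite !mxE.
Qed.

Lemma wedge_sum p q (X : 'M[R]_(p,n)) (Y : 'M[R]_(q,n)) (A : 'M[R]_(p,q)) :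
  \sum_i \sum_j A i j *: wedge2 (row i X) (row j Y)
  = X^T *m A *m Y - Y^T *m A^T *m X.
Proof.
rewrite [A^T]trmx_sum_delta {2}(matrix_sum_delta A).
rewrite ?mulmx_sumr ?mulmx_suml ?mulmx_sumr ?mulmx_suml -sumrB; apply: eq_bigr => i _.
rewrite !mulmx_sumr !mulmx_suml -sumrB; apply: eq_bigr => j _.
rewrite /wedge2 !rowTrow scalerBr.
by rewrite -!scalemxAr -!scalemxAl.
Qed.
End Aux.

Section Dec.
Variables (R : realType) (n l : nat) (H : 'M[R]_(l,n)).

Lemma decompE k (E : 'M[R]_(k,n)) A B Cc :
  decomp H E A B Cc = (H^T *m A *m H - H^T *m A^T *m H)
     + (H^T *m B *m E - E^T *m B^T *m H) + (E^T *m Cc *m E - E^T *m Cc^T *m E).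
Proof. by rewrite /decomp !wedge_sum. Qed.

Lemma xi_decomp k (E : 'M[R]_(k,n)) A B Cc (xi : 'rV[R]_n) :
  xi *m decomp H E A B Cc =
   (xi *m H^T *m (A - A^T) - xi *m E^T *m B^T) *m H
   + (xi *m H^T *m B + xi *m E^T *m (Cc - Cc^T)) *m E.
Proof.
rewrite decompE ?(mulmxDr, mulmxBr, mulmxDl, mulmxBl) ?(mulmxN, mulNmx) !mulmxA.
by rewrite -!addrA; congr (_ + (_ + _)); rewrite addrCA.
Qed.

Lemma compl_inv k (E : 'M[R]_(k,n)) : complement_basis H E ->
  exists Q : 'M[R]_(n, l + k), col_mx H E *m Q = 1%:M /\ Q *m col_mx H E = 1%:M.
Proof.
case=> /row_freeP[Q1 hQ1] /row_fullP[Q2 hQ2].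
have e : Q2 = Q1.
  by rewrite -[Q2]mulmx1 -hQ1 mulmxA hQ2 mul1mx.
by exists Q1; split; rewrite // -e.
Qed.

Lemma compl_solve k (E : 'M[R]_(k,n)) : complement_basis H E ->
  forall (mu : 'rV[R]_l) (nu : 'rV[R]_k),
  exists xi : 'rV[R]_n, xi *m H^T = mu /\ xi *m E^T = nu.
Proof.
move=> /compl_inv[Q [hPQ _]] mu nu.
exists (row_mx mu nu *m Q^T).
have : row_mx mu nu *m Q^T *m (col_mx H E)^T = row_mx mu nu.
  by rewrite -mulmxA -trmx_mul hPQ trmx1 mulmx1.
by rewrite tr_col_mx mul_mx_row => /eq_row_mx.
Qed.

Lemma compl_cap k (E : 'M[R]_(k,n)) (x : 'rV[R]_k) : complement_basis H E ->
  (x *m E <= H)%MS -> x *m E = 0.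
Proof.
move=> /compl_inv[Q [hPQ _]] /submxP[y hy].
have h0 : row_mx (- y) x *m col_mx H E = 0.
  by rewrite mul_row_col hy mulNmx addNr.
have : row_mx (- y) x = row_mx 0 0.
  by rewrite row_mx0 -[row_mx _ _]mulmx1 -hPQ mulmxA h0 mul0mx.
by case/eq_row_mx => _ ->; rewrite mul0mx.
Qed.

Lemma compl_decomp k (E : 'M[R]_(k,n)) (rho : 'M[R]_n) : complement_basis H E ->
  rho^T = - rho ->
  exists A B Cc, [/\ skew_mx A, skew_mx Cc & rho = decomp H E A B Cc].
Proof.
move=> /compl_inv[Q [hPQ hQP]] hr.
set P := col_mx H E.
set M := Q^T *m rho *m Q.
have hM : M^T = - M by rewrite /M !trmx_mul trmxK hr mulNmx mulmxN mulmxA.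
have eP : rho = P^T *m M *m P.
  by rewrite /M !mulmxA -trmx_mul hQP trmx1 mul1mx -mulmxA hQP mulmx1.
move: hM; rewrite -(submxK M) tr_block_mx opp_block_mx => /eq_block_mx[h11 h21 h12 h22].
have h2 : (2^-1 + 2^-1 : R) = 1 by field.
exists (2^-1 *: ulsubmx M), (ursubmx M), (2^-1 *: drsubmx M); split.
- by rewrite /skew_mx linearZ /= h11; apply: GRing.scalerN.
- by rewrite /skew_mx linearZ /= h22; apply: GRing.scalerN.
rewrite {1}eP -[M in P^T *m M](submxK M) /P tr_col_mx mul_row_block mul_row_col !mulmxDl.
rewrite decompE !linearZ /= h11 h22 h12 !mulmxN !mulNmx !GRing.scalerN !opprK !mulNmx !opprK -!mulmxDl -!GRing.scalerDl h2 !GRing.scale1r.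
by rewrite !mulmxDl -!addrA; congr (_ + _); rewrite addrCA.
Qed.

Lemma compl_exists (Z : 'M[R]_(l,n)) : Z *m H^T = 1%:M ->
  complement_basis H (row_base (kermx Z^T)) /\ row_base (kermx Z^T) *m Z^T = 0.
Proof.
move=> hZ.
have hHZ : H *m Z^T = 1%:M by rewrite -[H]trmxK -trmx_mul hZ trmx1.
have rZ : \rank Z = l.
  by apply/eqP; apply/row_freeP; exists H^T.
have rH : \rank H = l.
  by apply/eqP; apply/row_freeP; exists Z^T.
have EK := eq_row_base (kermx Z^T).
have EZ : row_base (kermx Z^T) *m Z^T = 0.
  by apply/sub_kermxP; rewrite EK.
have rE : \rank (row_base (kermx Z^T)) = (n - l)%N by rewrite EK mxrank_ker mxrank_tr rZ.
have dis : (H :&: row_base (kermx Z^T))%MS = 0.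
  apply/eqP; rewrite -submx0; apply/rV_subP => v; rewrite sub_capmx => /andP[/submxP[c ->] hv].
  rewrite EK in hv.
  have := sub_kermxP hv.
  by rewrite -mulmxA hHZ mulmx1 => ->; rewrite mul0mx sub0mx.
have rc := mxrank_disjoint_sum dis.
rewrite addsmxE rH rE in rc.
have hl : (l <= n)%N by rewrite -rZ rank_leq_col.
split => //; split; rewrite /row_free /row_full rc.
- by rewrite eqn_add2l mxrank_ker mxrank_tr rZ.
- by apply/eqP; exact: subnKC hl.
Qed.

Definition spl (rho : 'M[R]_n) := forall mu : 'rV[R]_l,
  exists xi : 'rV[R]_n, (xi *m rho <= H)%MS /\ xi *m H^T = mu.

Lemma Z0_exists : row_free H -> exists Z : 'M[R]_(l,n), Z *m H^T = 1%:M.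
Proof. by case/row_freeP => B hB; exists B^T; rewrite -trmx_mul hB trmx1. Qed.

Lemma P1 rho : row_free H -> spl rho <->
  (forall xi : 'rV[R]_n, exists y eta, (y <= H)%MS /\ eta *m H^T = 0 /\
      xi *m rho = y + eta *m rho).
Proof.
move=> /Z0_exists[Z hZ]; split.
- move=> hs xi; have [xi' [h1 h2]] := hs (xi *m H^T).
  exists (xi' *m rho), (xi - xi'); split => //; split.
    by rewrite mulmxBl h2 subrr.
  by rewrite mulmxBl addrC subrK.
- move=> h mu; have [y [eta [hy [he e]]]] := h (mu *m Z).
  exists (mu *m Z - eta); split.
    by rewrite mulmxBl e addrK.
  by rewrite mulmxBl he subr0 -mulmxA hZ mulmx1.
Qed.

Lemma P3a rho : spl rho -> forall k (E : 'M[R]_(k,n)), complement_basis H E ->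
  forall A B Cc, skew_mx Cc -> rho = decomp H E A B Cc ->
  forall i : 'I_l, (row i (B *m E) <= Cc *m E)%MS.
Proof.
move=> hs k E hE A B Cc hC er i.
have [xi [h1 h2]] := hs (delta_mx 0 i).
move: h1; rewrite er => h1.
set nu := xi *m E^T.
have h3 : ((delta_mx 0 i *m B + nu *m (Cc - Cc^T)) *m E <= H)%MS.
  have -> : (delta_mx 0 i *m B + nu *m (Cc - Cc^T)) *m E =
    xi *m decomp H E A B Cc - (delta_mx 0 i *m (A - A^T) - nu *m B^T) *m H.
    by rewrite xi_decomp h2 [_ + _ *m E]addrC addrK.
  by apply: addmx_sub => //; rewrite eqmx_opp submxMl.
have := @compl_cap _ _ _ hE h3.
rewrite mulmxDl hC opprK => /eqP; rewrite addr_eq0 => /eqP e.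
rewrite rowE mulmxA e eqmx_opp -mulmxA mulmxDl mulmxDr.
by apply: addmx_sub; exact: submxMl.
Qed.

Lemma P3b rho : row_free H -> rho^T = - rho ->
  (forall k (E : 'M[R]_(k,n)), complement_basis H E ->
    forall A B Cc, skew_mx A -> skew_mx Cc -> rho = decomp H E A B Cc ->
    forall i : 'I_l, (row i (B *m E) <= Cc *m E)%MS) -> spl rho.
Proof.
move=> /Z0_exists[Z hZ] hr h.
have [hE _] := @compl_exists _ hZ.
have [A [B [Cc [hA hC er]]]] := @compl_decomp _ _ _ hE hr.
have hBE : (B *m row_base (kermx Z^T) <= Cc *m row_base (kermx Z^T))%MS.
  by apply/row_subP => i; exact: (h _ _ hE A B Cc hA hC er i).
move=> mu.
have /submxP[w hw] := submx_trans (submxMl mu _) hBE.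
have [xi [h1 h2]] := @compl_solve _ _ hE mu ((- 2^-1) *: w).
exists xi; split => //.
rewrite er xi_decomp h1 h2 hC opprK [(_ + _) *m row_base _]mulmxDl -(mulmxA mu) hw.
have -> : w *m (Cc *m row_base (kermx Z^T)) +
    - 2^-1 *: w *m (Cc + Cc) *m row_base (kermx Z^T) = 0.
  rewrite mulmxDr mulmxDl -!scalemxAl -!mulmxA.
  set v := w *m _.
  rewrite -GRing.scalerDl -{1}[v]GRing.scale1r -GRing.scalerDl.
  have -> : (1 + (- 2^-1 + - 2^-1) : R) = 0 by field.
  by rewrite GRing.scale0r.
by rewrite addr0 submxMl.
Qed.

Lemma decomp_B0 k (E : 'M[R]_(k,n)) A B Cc : B *m E = 0 ->
  decomp H E A B Cc = decomp H E A 0 Cc.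
Proof.
move=> hBE; rewrite !decompE; congr (_ + _ + _).
have e2 : E^T *m B^T = 0 by rewrite -[LHS]trmxK trmx_mul !trmxK hBE trmx0.
rewrite -(mulmxA H^T) hBE mulmx0 e2 mul0mx subr0.
by rewrite mulmx0 mul0mx trmx0 mulmx0 mul0mx subr0.
Qed.

Lemma P4b rho : (exists k (E : 'M[R]_(k, n)) (A : 'M[R]_l) (Cc : 'M[R]_k),
          [/\ complement_basis H E, skew_mx A, skew_mx Cc &
              rho = decomp H E A 0 Cc]) -> spl rho.
Proof.
move=> [k [E [A [Cc [hE hA hC er]]]]] mu.
have [xi [h1 h2]] := @compl_solve _ _ hE mu 0.
exists xi; split => //.
rewrite er xi_decomp h1 h2 !mul0mx !mulmx0 addr0 subr0 mul0mx addr0.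
exact: submxMl.
Qed.

Lemma P4a rho : spl rho -> rho^T = - rho ->
  exists k (E : 'M[R]_(k, n)) (A : 'M[R]_l) (Cc : 'M[R]_k),
          [/\ complement_basis H E, skew_mx A, skew_mx Cc &
              rho = decomp H E A 0 Cc].
Proof.
move=> hs hr.
have : forall i : 'I_l, exists xi : 'rV[R]_n,
   (xi *m rho <= H)%MS /\ xi *m H^T = delta_mx 0 i by move=> i; exact: hs.
case/fin_all_exists => f hf.
pose Z := \matrix_(i < l) f i.
have hZ : Z *m H^T = 1%:M.
  by apply/row_matrixP => i; rewrite row_mul rowK row1 (hf i).2.
have [hE hEZ] := @compl_exists Z hZ.
have [A [B [Cc [hA hC er]]]] := @compl_decomp _ _ _ hE hr.
exists _, (row_base (kermx Z^T)), A, Cc; split => //.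
rewrite er decomp_B0 //.
apply/row_matrixP => i; rewrite row0 row_mul rowE.
have hfE : f i *m (row_base (kermx Z^T))^T = 0.
  have hZE : Z *m (row_base (kermx Z^T))^T = 0.
    by rewrite -[LHS]trmxK trmx_mul trmxK hEZ trmx0.
  by rewrite -(rowK (fun i => f i) i) -row_mul hZE row0.
have h := (hf i).1; rewrite er in h.
apply: (@compl_cap _ _ _ hE).
have -> : delta_mx 0 i *m B *m row_base (kermx Z^T) =
  f i *m decomp H (row_base (kermx Z^T)) A B Cc - delta_mx 0 i *m (A - A^T) *m H.
  by rewrite xi_decomp hfE (hf i).2 !mul0mx subr0 addr0 addrC addKr.
by apply: addmx_sub => //; rewrite eqmx_opp submxMl.
Qed.

End Dec.

Theorem proposition2p7 (R : realType) (n l : nat)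
  (C : 'I_n -> 'I_n -> 'rV[R]_n) (H : 'M[R]_(l, n))
  (r : 'rV[R]_l -> 'M[R]_n) :
  is_lie_algebra C ->
  abelian_subalg_basis C H ->
  triangular_dynamical_rmatrix C H r ->
  [/\ (splittable H r <->
        forall lam (xi : 'rV[R]_n), in_g_lambda H r lam (sharp (r lam) xi)),
      (splittable H r <->
        forall k (E : 'M[R]_(k, n)), complement_basis H E ->
        forall lam (A : 'M[R]_l) (B : 'M[R]_(l, k)) (Cc : 'M[R]_k),
          skew_mx A -> skew_mx Cc -> r lam = decomp H E A B Cc ->
          forall i : 'I_l, (row i (B *m E) <= Cc *m E)%MS),
      (splittable H r <->
        forall lam, exists k (E : 'M[R]_(k, n)) (A : 'M[R]_l) (Cc : 'M[R]_k),
          [/\ complement_basis H E, skew_mx A, skew_mx Cc &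
              r lam = decomp H E A 0 Cc]) &
      (splittable H r <->
        forall lam (mu : 'rV[R]_l), in_B H r lam (mu, 0))].
Proof.
move=> _ [hHf _] [hsk _].
split.
- split => [hs lam xi | h lam].
    exact: (@P1 _ _ _ H (r lam) hHf).1 (hs lam) xi.
  by apply/(@P1 _ _ _ H (r lam) hHf).2 => xi; exact: h lam xi.
- split => [hs k E hE lam A B Cc hA hC er | h lam].
    exact: (@P3a _ _ _ H (r lam) (hs lam) k E hE A B Cc hC er).
  apply: (@P3b _ _ _ H (r lam) hHf (hsk lam)) => k E hE A B Cc hA hC er.
  exact: h k E hE lam A B Cc hA hC er.
- split => [hs lam | h lam].
    exact: (@P4a _ _ _ H (r lam) (hs lam) (hsk lam)).
  exact: (@P4b _ _ _ H (r lam) (h lam)).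
- split => [hs lam mu | h lam mu].
    have [xi [h1 h2]] := hs lam mu.
    case/submxP: h1 => c hc.
    exists (c, xi).
    by rewrite /Lambda_sharp /= h2 /sharp -hc addNr.
  have [[c xi] e] := h lam mu.
  case: e => h1 h2.
  exists xi; split => //.
  move/eqP: h2; rewrite addrC subr_eq0 => /eqP h2.
  by rewrite /in_h h2 submxMl.
Qed.
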